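(* In the two-door cascading memoryless semi-fractional setting, let $x\in[0,1]$, let $w$ be a non-empty finite sequence of knocks that is $x$-invariant, and let $\pi$ be a semi-fractional sequence. If $\mathbb{E}_x[w\pi]\le\mathbb{E}_x[\pi]$, then $\mathbb{E}_x[w^\infty]\le\mathbb{E}_x[w\pi]$.
   Context: Two cascading memoryless doors with durations: parameters $p_1,p_2\in(0,1)$, $q_1=1-p_1$, $q_2=1-p_2$, and $c>0$. Sequences consist of knocks $1^t$ ($t\ge0$ real) and $2$; a semi-fractional sequence is an infinite such sequence. A 1-knock $1^t$ takes $t$ time units and, if door 1 is closed, opens it with probability $1-q_1^t$, independently of everything else. A 2-knock takes $c$ time units and opens door 2 with probability $p_2$ (independently) if door 1 is open at that time, and with probability $0$ otherwise. There is no feedback; the running time is the time at which both doors are open. For $x\in[0,1]$, $\mathbb{E}_x[\pi]$ is the expected running time of $\pi$ when started with door 2 closed and door 1 closed with probability $x$. For a finite sequence $w$ the state map $\delta$ is defined by $\delta(x,1^t)=q_1^tx$, $\delta(x,2)=x/(q_2+p_2x)$, $\delta(x,aw)=\delta(\delta(x,a),w)$ for a knock $a$. A non-empty finite sequence $w$ is $x$-invariant if $\delta(x,w)=x$. $w\pi$ denotes concatenation and $w^\infty=www\cdots$. *)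

(* Defs.v *)
From HB Require Import structures.
From mathcomp Require Import all_boot all_order all_algebra.
From mathcomp Require Import all_classical all_reals all_analysis.
Set Implicit Arguments. Unset Strict Implicit. Unset Printing Implicit Defensive.
Import Order.TTheory GRing.Theory Num.Theory.
Local Open Scope ring_scope.

(* A knock: a 1-knock 1^t (t a real duration) or a 2-knock. *)
Inductive knock (R : Type) := Knock1 of R | Knock2.
Arguments Knock2 {R}.

Section Doors.
Variable R : realType.
Variables (p1 p2 c : R).
Let q1 := 1 - p1.
Let q2 := 1 - p2.

Definition knock_ok (k : knock R) : bool :=
  if k is Knock1 t then 0 <= t else true.

Definition dur (k : knock R) : R := if k is Knock1 t then t else c.

(* Forward (unnormalised) evolution of the joint law of (door 1, "door 2 still
   closed").  State (a, b):
     a = P(door 1 closed and door 2 still closed),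
     b = P(door 1 open   and door 2 still closed).
   A 1-knock 1^t opens a closed door 1 with prob. 1 - q1^t;
   a 2-knock opens door 2 with prob. p2 iff door 1 is open. *)
Definition step (st : R * R) (k : knock R) : R * R :=
  let: (a, b) := st in
  match k with
  | Knock1 t => (a * q1 `^ t, b + a * (1 - q1 `^ t))
  | Knock2 => (a, b * q2)
  end.

(* probability that not both doors are open after the first n knocks of pi,
   starting with door 1 closed with probability x and door 2 closed *)
Definition surv (x : R) (pi : nat -> knock R) (n : nat) : R :=
  let: (a, b) := foldl step (x, 1 - x) [seq pi i | i <- iota 0 n] in a + b.

(* Expected running time: E[T] = sum_i dur(pi_i) * P(T > start of knock i),
   an extended real (possibly +oo). *)
Definition expect (x : R) (pi : nat -> knock R) : \bar R :=
  (\sum_(i <oo) ((dur (pi i) * surv x pi i)%:E))%E.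

Definition delta1 (x : R) (k : knock R) : R :=
  match k with
  | Knock1 t => q1 `^ t * x
  | Knock2 => x / (q2 + p2 * x)
  end.
Definition delta (x : R) (w : seq (knock R)) : R := foldl delta1 x w.

End Doors.

Definition kcat (R : Type) (w : seq (knock R)) (pi : nat -> knock R) : nat -> knock R :=
  fun n => if (n < size w)%N then nth Knock2 w n else pi (n - size w)%N.
Definition kinf (R : Type) (w : seq (knock R)) : nat -> knock R :=
  fun n => nth Knock2 w (n %% size w).

(* Main.v *)
Require Import Defs.
From HB Require Import structures.
From mathcomp Require Import all_boot all_order all_algebra.
From mathcomp Require Import all_classical all_reals all_analysis.
From mathcomp Require Import ring lra.
Import Order.TTheory GRing.Theory Num.Theory.
Set Implicit Arguments. Unset Strict Implicit.
Local Open Scope ring_scope.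

Section L.
Variables (R : realType) (p1 p2 : R).
Hypothesis hp2 : 0 < p2 < 1.

Lemma foldl_scale (l : seq (knock R)) (s a b : R) :
  foldl (step p1 p2) (s * a, s * b) l =
  (s * (foldl (step p1 p2) (a, b) l).1, s * (foldl (step p1 p2) (a, b) l).2).
Proof.
elim: l a b => [|k l IH] a b //=.
case: k => [t|] /=.
  by rewrite -IH; congr foldl; congr pair; ring.
by rewrite -IH; congr foldl; congr pair; ring.
Qed.

Lemma foldl_delta (l : seq (knock R)) (s y : R) : 0 <= s -> 0 <= y ->
  exists S, 0 <= S /\
  foldl (step p1 p2) (s * y, s * (1 - y)) l = (S * delta p1 p2 y l, S * (1 - delta p1 p2 y l)).
Proof.
case/andP: hp2 => p20 p21.
elim: l s y => [|k l IH] s y s0 y0 /=; first by exists s.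
case: k => [t|] /=.
  have := IH s ((1 - p1) `^ t * y) s0 (mulr_ge0 (powR_ge0 _ _) y0).
  move=> [S [S0 HS]]; exists S; split => //.
  by rewrite -HS; congr foldl; congr pair; ring.
have hq : 0 < (1 - p2) + p2 * y.
  by have := mulr_ge0 (ltW p20) y0; lra.
have := IH (s * ((1 - p2) + p2 * y)) (y / ((1 - p2) + p2 * y))
  (mulr_ge0 s0 (ltW hq)) (divr_ge0 y0 (ltW hq)).
move=> [S [S0 HS]]; exists S; split => //.
rewrite -HS; congr foldl; congr pair; field; by rewrite gt_eqF.
Qed.
End L.
Section M.
Variables (R : realType) (p1 p2 : R).
Hypothesis hp2 : 0 < p2 < 1.

Lemma surv_ge0 x pi n : 0 <= x -> 0 <= surv p1 p2 x pi n.
Proof.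
move=> x0; rewrite /surv.
have [S [S0 HS]] := @foldl_delta R p1 p2 hp2 [seq pi i | i <- iota 0 n] 1 x ler01 x0.
by rewrite !mul1r in HS; rewrite HS -mulrDr addrC subrK mulr1.
Qed.

Definition Sw x (w : seq (knock R)) : R :=
  let: (a, b) := foldl (step p1 p2) (x, 1 - x) w in a + b.

Lemma surv_cat x (w : seq (knock R)) (r : seq (knock R)) : 0 <= x ->
  delta p1 p2 x w = x ->
  (let: (a, b) := foldl (step p1 p2) (x, 1 - x) (w ++ r) in a + b) =
  Sw x w * (let: (a, b) := foldl (step p1 p2) (x, 1 - x) r in a + b).
Proof.
move=> x0 hd; rewrite /Sw foldl_cat.
have [S [S0 HS]] := @foldl_delta R p1 p2 hp2 w 1 x ler01 x0.
rewrite !mul1r hd in HS; rewrite HS foldl_scale.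
case: (foldl _ _ r) => a b /=; ring.
Qed.

Lemma pref_kcat (w : seq (knock R)) pi n :
  [seq kcat w pi i | i <- iota 0 (size w + n)] = w ++ [seq pi i | i <- iota 0 n].
Proof.
rewrite iotaD map_cat add0n; congr cat.
  rewrite -[RHS](take_size w) -(map_nth_iota0 Knock2 (leqnn _)).
  by apply/eq_in_map => i; rewrite mem_iota add0n /kcat => /andP[_ ->].
rewrite -[size w]addn0 iotaDl -map_comp; apply: eq_map => i /=.
by rewrite /kcat ltnNge leq_addr /= addKn.
Qed.

Lemma pref_kinf (w : seq (knock R)) n : (0 < size w)%N ->
  [seq kinf w i | i <- iota 0 (size w + n)] = w ++ [seq kinf w i | i <- iota 0 n].
Proof.
move=> w0; rewrite iotaD map_cat add0n; congr cat.
  rewrite -[RHS](take_size w) -(map_nth_iota0 Knock2 (leqnn _)).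
  by apply/eq_in_map => i; rewrite mem_iota add0n /kinf => /andP[_ ?]; rewrite modn_small.
rewrite -[size w]addn0 iotaDl -map_comp; apply: eq_map => i /=.
by rewrite /kinf modnDl.
Qed.

Lemma pref_eq (w : seq (knock R)) pi n : (n <= size w)%N ->
  [seq kcat w pi i | i <- iota 0 n] = [seq kinf w i | i <- iota 0 n].
Proof.
move=> nw; apply/eq_in_map => i; rewrite mem_iota add0n => /andP[_ ilt].
have iw : (i < size w)%N by apply: leq_trans nw.
by rewrite /kcat /kinf iw modn_small.
Qed.

End M.
Lemma fold_ge0 (R : realType) (p1 p2 : R) (l : seq (knock R)) x : 0 < p2 < 1 -> 0 <= x ->
  0 <= (let: (a, b) := foldl (step p1 p2) (x, 1 - x) l in a + b).
Proof.
move=> hp2 x0.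
have [S [S0 HS]] := @foldl_delta R p1 p2 hp2 l 1 x ler01 x0.
by rewrite !mul1r in HS; rewrite HS -mulrDr addrC subrK mulr1.
Qed.

Lemma dur_ge0 (R : realType) (c : R) k : 0 < c -> knock_ok k -> 0 <= dur c k.
Proof. by case: k => [t|] /= c0 // _; apply: ltW. Qed.

Lemma ok_nth (R : realType) (w : seq (knock R)) i : all (@knock_ok R) w -> knock_ok (nth Knock2 w i).
Proof.
move=> wok; case: (ltnP i (size w)) => hi; first by exact: (all_nthP Knock2 wok).
by rewrite nth_default.
Qed.


Theorem mainTheorem13 (R : realType) (p1 p2 c x : R)
    (w : seq (knock R)) (pi : nat -> knock R) :
  0 < p1 < 1 -> 0 < p2 < 1 -> 0 < c -> 0 <= x <= 1 ->
  (0 < size w)%N -> all (@knock_ok R) w -> (forall n, knock_ok (pi n)) ->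
  delta p1 p2 x w = x ->
  (expect p1 p2 c x (kcat w pi) <= expect p1 p2 c x pi)%E ->
  (expect p1 p2 c x (kinf w) <= expect p1 p2 c x (kcat w pi))%E.
Proof.
Local Open Scope ereal_scope.
move=> _ hp2 c0 /andP[x0 _] w0 wok piok hd hyp.
set m := size w.
set S := Sw p1 p2 x w.
have S0 : (0 <= S)%R by apply: fold_ge0.
have survc n : surv p1 p2 x (kcat w pi) (m + n) = (S * surv p1 p2 x pi n)%R.
  by rewrite /surv pref_kcat; apply: surv_cat.
have survi n : surv p1 p2 x (kinf w) (m + n) = (S * surv p1 p2 x (kinf w) n)%R.
  by rewrite /surv pref_kinf //; apply: surv_cat.
have okc n : knock_ok (kcat w pi n).
  by rewrite /kcat; case: ifP => _; [apply: ok_nth | apply: piok].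
have oki n : knock_ok (kinf w n) by apply: ok_nth.
set Fc := fun n => (dur c (kcat w pi n) * surv p1 p2 x (kcat w pi) n)%:E.
set Fi := fun n => (dur c (kinf w n) * surv p1 p2 x (kinf w) n)%:E.
set Fp := fun n => (dur c (pi n) * surv p1 p2 x pi n)%:E.
have Fc0 n : 0 <= Fc n by rewrite lee_fin mulr_ge0 ?dur_ge0 ?surv_ge0.
have Fi0 n : 0 <= Fi n by rewrite lee_fin mulr_ge0 ?dur_ge0 ?surv_ge0.
have Fp0 n : 0 <= Fp n by rewrite lee_fin mulr_ge0 ?dur_ge0 ?surv_ge0.
set A := \sum_(0 <= i < m) Fc i.
have AFi : A = \sum_(0 <= i < m) Fi i.
  apply: eq_big_nat => i /andP[_ im].
  rewrite /Fc /Fi /surv pref_eq ?(ltnW im) //.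
  by rewrite /kcat /kinf im modn_small.
have E1 : expect p1 p2 c x (kcat w pi) = A + S%:E * expect p1 p2 c x pi.
  rewrite /expect -/Fc (nneseries_split 0 m (fun k _ => Fc0 k)) add0n.
  rewrite -nneseries_addn //; congr (_ + _).
  rewrite -(@nneseriesZl _ _ xpredT S 0 (fun i _ => Fp0 i)).
  apply: congr_lim; apply/funext => n; apply: eq_bigr => i _.
  rewrite /Fc /Fp addnC survc /kcat ltnNge leq_addr /= addKn.
  by rewrite -EFinM; congr EFin; ring.
set P := expect p1 p2 c x (kcat w pi).
have P0 : 0 <= P.
  by rewrite /P /expect -/Fc; apply: nneseries_ge0 => n _ _; apply: Fc0.
have E2 N : \sum_(0 <= i < N * m) Fi i <= P.
  elim: N => [|N IH]; first by rewrite mul0n big_geq.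
  rewrite mulSn (@big_cat_nat _ _ _ m) ?leq_addr //= -AFi.
  rewrite -{1}(add0n m) big_addn addKn.
  rewrite (eq_bigr (fun i => S%:E * Fi i)); last first.
    move=> i _; rewrite /Fi addnC survi /kinf modnDl.
    by rewrite -EFinM; congr EFin; ring.
  rewrite -ge0_sume_distrr //.
  rewrite [X in _ <= X]E1; apply: leeD2l.
  apply: lee_wpmul2l; first by rewrite lee_fin.
  exact: le_trans IH hyp.
rewrite /expect -/Fi.
apply: lime_le.
  by apply: (@is_cvg_nneseries R Fi xpredT 0) => n _ _; exact: Fi0.
apply: nearW => n.
apply: le_trans (E2 n).
apply: lee_sum_nneg_natr; first by move=> k _ _; exact: Fi0.
by rewrite leq_pmulr.
Qed.
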